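(* Let $A$ and $B$ be nonempty closed subsets of a complete metric space $(X,\rho)$ such that both ordered pairs $(A,B)$ and $(B,A)$ have the $BUC$ property. Let $F:A\times A\to B$ and $G:B\times B\to A$ be such that there exist $\alpha,\beta\in(0,1)$ with $\alpha+\beta<1$ and $$\rho(F(x,y),G(u,v))\le\alpha\rho(x,u)+\beta\rho(y,v)+(1-(\alpha+\beta))\,\mathrm{dist}(A,B)$$ for all $(x,y)\in A\times A$ and $(u,v)\in B\times B$. Then there exist a coupled best proximity point $(x,y)$ of $F$ in $A\times A$ and a coupled best proximity point $(u,v)$ of $G$ in $B\times B$ such that $\rho(x,u)+\rho(y,v)=2\,\mathrm{dist}(A,B)$.
   Context: $\mathrm{dist}(A,B)=\inf\{\rho(a,b):a\in A,\ b\in B\}$. A point $(x,y)\in A\times A$ is a coupled best proximity point of $F:A\times A\to B$ if $\rho(x,F(x,y))=\rho(y,F(y,x))=\mathrm{dist}(A,B)$; similarly $(u,v)\in B\times B$ is a coupled best proximity point of $G:B\times B\to A$ if $\rho(u,G(u,v))=\rho(v,G(v,u))=\mathrm{dist}(A,B)$. The ordered pair $(A,B)$ has the bounded $UC$ property ($BUC$) if for all bounded sequences $\{x_n\},\{z_n\}\subset A$ and every sequence $\{y_n\}\subset B$ with $\lim_n\rho(x_n,y_n)=\lim_n\rho(z_n,y_n)=\mathrm{dist}(A,B)$ one has $\lim_n\rho(x_n,z_n)=0$; the property for $(B,A)$ is defined with the roles of $A$ and $B$ interchanged. *)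

(* Defs.v *)
From Stdlib Require Import Reals.
Open Scope R_scope.

Definition is_metric {X : Type} (rho : X -> X -> R) : Prop :=
  (forall x y, 0 <= rho x y) /\
  (forall x y, rho x y = 0 <-> x = y) /\
  (forall x y, rho x y = rho y x) /\
  (forall x y z, rho x z <= rho x y + rho y z).

Definition converges_to {X : Type} (rho : X -> X -> R) (s : nat -> X) (l : X) : Prop :=
  forall eps, eps > 0 -> exists N, forall n, (n >= N)%nat -> rho (s n) l < eps.

Definition cauchy {X : Type} (rho : X -> X -> R) (s : nat -> X) : Prop :=
  forall eps, eps > 0 -> exists N, forall m n, (m >= N)%nat -> (n >= N)%nat ->
    rho (s m) (s n) < eps.

Definition complete_metric {X : Type} (rho : X -> X -> R) : Prop :=
  forall s : nat -> X, cauchy rho s -> exists l, converges_to rho s l.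

Definition metric_closed {X : Type} (rho : X -> X -> R) (A : X -> Prop) : Prop :=
  forall (s : nat -> X) (l : X), (forall n, A (s n)) -> converges_to rho s l -> A l.

Definition nonempty {X : Type} (A : X -> Prop) : Prop := exists x, A x.

(* dist(A,B) = inf { rho a b : a in A, b in B } *)
Definition dist_set {X : Type} (rho : X -> X -> R) (A B : X -> Prop) : R -> Prop :=
  fun r => exists a b, A a /\ B b /\ r = rho a b.

Definition is_inf (E : R -> Prop) (m : R) : Prop :=
  (forall r, E r -> m <= r) /\ (forall m', (forall r, E r -> m' <= r) -> m' <= m).

Definition bounded_seq {X : Type} (rho : X -> X -> R) (s : nat -> X) : Prop :=
  exists x0 M, forall n, rho (s n) x0 <= M.

(* Bounded UC property of the ordered pair (A,B); d stands for dist(A,B). *)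
Definition BUC {X : Type} (rho : X -> X -> R) (A B : X -> Prop) (d : R) : Prop :=
  forall (x z y : nat -> X),
    (forall n, A (x n)) -> (forall n, A (z n)) -> (forall n, B (y n)) ->
    bounded_seq rho x -> bounded_seq rho z ->
    Un_cv (fun n => rho (x n) (y n)) d ->
    Un_cv (fun n => rho (z n) (y n)) d ->
    Un_cv (fun n => rho (x n) (z n)) 0.

(* Main.v *)
Require Import Defs.
From Stdlib Require Import Reals Lra Lia Psatz Classical ClassicalEpsilon.
Open Scope R_scope.

Lemma powK_small K M eps : 0 <= K < 1 -> eps > 0 ->
  exists N, forall n, (n >= N)%nat -> K^n * M < eps.
Proof.
  intros HK He.
  assert (Hc : 0 < Rabs M + 1) by (pose proof (Rabs_pos M); lra).
  destruct (pow_lt_1_zero K) with (y := eps / (Rabs M + 1)) as [N HN].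
  { rewrite Rabs_right; lra. }
  { apply Rdiv_lt_0_compat; lra. }
  exists N. intros n Hn. specialize (HN n Hn).
  rewrite Rabs_right in HN by (apply Rle_ge, pow_le; lra).
  assert (Hp : 0 <= K ^ n) by (apply pow_le; lra).
  set (e' := eps / (Rabs M + 1)) in *.
  assert (Heq : eps = e' * (Rabs M + 1)) by (unfold e'; field; lra).
  pose proof (Rle_abs M). pose proof (Rabs_pos M).
  rewrite Heq. nra.
Qed.

Lemma pow_le1 K n : 0 <= K <= 1 -> K ^ n <= 1.
Proof.
  intros HK. rewrite <- (pow1 n). apply pow_incr. lra.
Qed.

Lemma cauchy_of_buc (X:Type) (rho: X->X->R) (A B: X->Prop) d (p q : nat -> X) K M :
 is_metric rho -> BUC rho A B d -> (forall a b, A a -> B b -> d <= rho a b) ->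
 (forall n, A (p n)) -> (forall n, B (q n)) -> 0 <= K < 1 ->
 (forall n j, rho (p (n + j)%nat) (q n) <= d + K^n * M) -> cauchy rho p.
Proof.
  intros Hm Hbuc Hd Hp Hq HK Hb.
  unfold cauchy. apply NNPP; intro Hnc.
  apply not_all_ex_not in Hnc. destruct Hnc as [eps Hnc].
  apply imply_to_and in Hnc. destruct Hnc as [Heps Hnc].
  assert (Hex: forall N, exists mn : nat*nat, (fst mn >= N)%nat /\ (snd mn >= N)%nat
     /\ eps <= rho (p (fst mn)) (p (snd mn))).
  { intro N. apply NNPP; intro Hno. apply Hnc. exists N. intros m n Hm' Hn'.
    apply Rnot_le_lt. intro Hle. apply Hno. exists (m,n). simpl. auto. }
  set (f := fun N => proj1_sig (constructive_indefinite_description _ (Hex N))).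
  assert (Hf: forall N, (fst (f N) >= N)%nat /\ (snd (f N) >= N)%nat
     /\ eps <= rho (p (fst (f N))) (p (snd (f N)))).
  { intro N. unfold f. apply (proj2_sig (constructive_indefinite_description _ (Hex N))). }
  assert (Hcv : forall g : nat -> nat, (forall N, (g N >= N)%nat) ->
            Un_cv (fun N => rho (p (g N)) (q N)) d).
  { intros g Hg e He. destruct (powK_small K M e HK He) as [N0 HN0].
    exists N0. intros n Hn. unfold R_dist.
    specialize (Hg n).
    assert (H1 : d <= rho (p (g n)) (q n)) by (apply Hd; auto).
    assert (H2 : rho (p (g n)) (q n) <= d + K^n * M).
    { replace (g n) with (n + (g n - n))%nat by lia. apply Hb. }
    specialize (HN0 n Hn).
    rewrite Rabs_right by lra. lra. }
  assert (Hbd : forall g : nat -> nat, bounded_seq rho (fun N => p (g N))).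
  { intros g. exists (q 0%nat), (d + M). intro n. pose proof (Hb 0%nat (g n)) as H.
    simpl in H. lra. }
  assert (Hres := Hbuc (fun N => p (fst (f N))) (fun N => p (snd (f N))) q
     (fun n => Hp _) (fun n => Hp _) Hq (Hbd _) (Hbd _)
     (Hcv (fun N => fst (f N)) (fun N => proj1 (Hf N)))
     (Hcv (fun N => snd (f N)) (fun N => proj1 (proj2 (Hf N))))).
  destruct (Hres eps Heps) as [N HN]. specialize (HN N (Nat.le_refl N)).
  unfold R_dist in HN. rewrite Rminus_0_r in HN.
  destruct (Hf N) as [_ [_ Hle]].
  pose proof (Rle_abs (rho (p (fst (f N))) (p (snd (f N))))). simpl in HN. lra.
Qed.

Lemma close_lim X rho (P R1 R2 Q1 Q2 : nat -> X) xs ys w d al be K M :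
 is_metric rho -> converges_to rho R1 xs -> converges_to rho R2 ys -> converges_to rho P xs ->
 0 < al -> 0 < be -> al + be < 1 -> 0 <= K < 1 ->
 (forall n, rho w (P n) <= al * rho xs (Q1 n) + be * rho ys (Q2 n) + (1 - (al+be)) * d) ->
 (forall n, rho (R1 n) (Q1 n) <= d + K^n * M) -> (forall n, rho (R2 n) (Q2 n) <= d + K^n*M) ->
 rho xs w <= d.
Proof.
  intros [Hpos [Hz [Hs Ht]]] C1 C2 C3 Ha Hb Hab HK Hw B1 B2.
  destruct (Rle_or_lt (rho xs w) d) as [H|H]; auto.
  set (e := rho xs w - d).
  assert (He : e / 4 > 0) by (unfold e; lra).
  destruct (C1 _ He) as [N1 H1]. destruct (C2 _ He) as [N2 H2].
  destruct (C3 _ He) as [N3 H3]. destruct (powK_small K M _ HK He) as [N4 H4].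
  set (n := Nat.max N1 (Nat.max N2 (Nat.max N3 N4))).
  specialize (H1 n ltac:(unfold n; lia)). specialize (H2 n ltac:(unfold n; lia)).
  specialize (H3 n ltac:(unfold n; lia)). specialize (H4 n ltac:(unfold n; lia)).
  specialize (B1 n). specialize (B2 n). specialize (Hw n).
  pose proof (Ht xs (P n) w). rewrite (Hs (P n) w) in H0. rewrite (Hs xs (P n)) in H0.
  pose proof (Ht xs (R1 n) (Q1 n)). rewrite (Hs xs (R1 n)) in H5.
  pose proof (Ht ys (R2 n) (Q2 n)). rewrite (Hs ys (R2 n)) in H6.
  assert (al * rho xs (Q1 n) <= al * (d + e/2)) by (apply Rmult_le_compat_l; lra).
  assert (be * rho ys (Q2 n) <= be * (d + e/2)) by (apply Rmult_le_compat_l; lra).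
  assert ((al + be) * (e/2) < e/2) by nra.
  unfold e in *. nra.
Qed.

Definition TT {X} (H : X -> X -> X) (p : X*X) := (H (fst p) (snd p), H (snd p) (fst p)).
Fixpoint seqa {X} (F G : X->X->X) (p0 : X*X) n := match n with
  | O => p0 | S n => TT G (TT F (seqa F G p0 n)) end.
Definition EE {X} (rho : X -> X -> R) (p q : X*X) := rho (fst p) (fst q) + rho (snd p) (snd q).

Theorem theorem35 (X : Type) (rho : X -> X -> R) (A B : X -> Prop) (d : R)
  (F G : X -> X -> X) (alpha beta : R) :
  is_metric rho -> complete_metric rho ->
  nonempty A -> nonempty B -> metric_closed rho A -> metric_closed rho B ->
  is_inf (dist_set rho A B) d ->
  BUC rho A B d -> BUC rho B A d ->
  (forall x y, A x -> A y -> B (F x y)) ->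
  (forall u v, B u -> B v -> A (G u v)) ->
  0 < alpha < 1 -> 0 < beta < 1 -> alpha + beta < 1 ->
  (forall x y u v, A x -> A y -> B u -> B v ->
     rho (F x y) (G u v) <= alpha * rho x u + beta * rho y v + (1 - (alpha + beta)) * d) ->
  exists x y u v,
    A x /\ A y /\ B u /\ B v /\
    rho x (F x y) = d /\ rho y (F y x) = d /\
    rho u (G u v) = d /\ rho v (G v u) = d /\
    rho x u + rho y v = 2 * d.
Proof.
  intros Hm Hcomp [x0 Hx0] HneB HclA HclB Hinf Hbuc1 Hbuc2 HF HG Ha Hb Hab Hc.
  pose proof Hm as [Hpos [Hz [Hs Ht]]].
  set (k := alpha + beta). set (K := k * k).
  assert (HK : 0 <= K < 1) by (unfold K, k; nra).
  assert (Hd : forall a b, A a -> B b -> d <= rho a b).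
  { intros a b HA HB. apply (proj1 Hinf). exists a, b. auto. }
  set (a := fun n => seqa F G (x0, x0) n).
  set (b := fun n => TT F (a n)).
  assert (HA : forall n, A (fst (a n)) /\ A (snd (a n))).
  { induction n as [|n IH]; simpl; auto. destruct IH. simpl. split; apply HG; apply HF; auto. }
  assert (HB : forall n, B (fst (b n)) /\ B (snd (b n))).
  { intro n. destruct (HA n). unfold b, TT; simpl. split; apply HF; auto. }
  assert (Hcon : forall p q, A (fst p) -> A (snd p) -> B (fst q) -> B (snd q) ->
     EE rho (TT F p) (TT G q) - 2*d <= k * (EE rho p q - 2*d)).
  { intros p q H1 H2 H3 H4. unfold EE, TT; simpl.
    pose proof (Hc _ _ _ _ H1 H2 H3 H4). pose proof (Hc _ _ _ _ H2 H1 H4 H3).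
    unfold k; lra. }
  assert (HEs : forall p q, EE rho p q = EE rho q p).
  { intros; unfold EE; rewrite (Hs (fst p)), (Hs (snd p)); reflexivity. }
  assert (HEt : forall p q r, EE rho p r <= EE rho p q + EE rho q r).
  { intros; unfold EE. pose proof (Ht (fst p) (fst q) (fst r)).
    pose proof (Ht (snd p) (snd q) (snd r)). lra. }
  assert (Hk0 : 0 <= k) by (unfold k; lra).
  assert (Hstep : forall n j, EE rho (a (n+j)%nat) (b n) - 2*d <= K^n * (EE rho (a j) (b 0%nat) - 2*d)).
  { induction n as [|n IH]; intro j.
    - simpl. lra.
    - change (a (S n + j)%nat) with (TT G (TT F (a (n+j)%nat))).
      change (b (S n)) with (TT F (TT G (b n))).
      destruct (HA (n+j)%nat) as [A1 A2]. destruct (HB n) as [B1 B2].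
      assert (HB' : B (fst (TT F (a (n+j)%nat))) /\ B (snd (TT F (a (n+j)%nat)))).
      { unfold TT; simpl; split; apply HF; auto. }
      assert (HA' : A (fst (TT G (b n))) /\ A (snd (TT G (b n)))).
      { unfold TT; simpl; split; apply HG; auto. }
      destruct HB', HA'.
      rewrite (HEs (TT G (TT F (a (n+j)%nat)))).
      pose proof (Hcon _ _ H1 H2 H H0).
      rewrite (HEs (TT G (b n))) in H3.
      pose proof (Hcon _ _ A1 A2 B1 B2).
      specialize (IH j).
      change (b n) with (b n) in *.
      assert (k * (EE rho (TT F (a (n + j)%nat)) (TT G (b n)) - 2 * d)
              <= k * (k * (EE rho (a (n + j)%nat) (b n) - 2 * d))) by (apply Rmult_le_compat_l; lra).
      assert (k * (k * (EE rho (a (n + j)%nat) (b n) - 2 * d)) <= K * (K^n * (EE rho (a j) (b 0%nat) - 2*d))).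
      { unfold K. rewrite Rmult_assoc. apply Rmult_le_compat_l; auto. apply Rmult_le_compat_l; auto. }
      replace (K ^ S n) with (K * K^n) by reflexivity. lra. }
  set (c0 := EE rho (a 0%nat) (b 0%nat)). set (e0 := EE rho (a 1%nat) (b 0%nat)).
  set (M := (c0 + e0) / (1 - k)).
  assert (Hc0 : 2 * d <= c0).
  { unfold c0, EE. destruct (HA 0%nat), (HB 0%nat).
    pose proof (Hd _ _ H H1). pose proof (Hd _ _ H0 H2). lra. }
  assert (HM : forall j, EE rho (a j) (b 0%nat) - 2*d <= M).
  { intro j.
    pose proof (HEt (a j) (b j) (a 1%nat)). pose proof (HEt (a j) (a 1%nat) (b 0%nat)).
    destruct (HA j), (HB 0%nat).
    pose proof (Hcon (a j) (b 0%nat) H1 H2 H3 H4) as Hc1.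
    change (TT F (a j)) with (b j) in Hc1.
    change (TT G (b 0%nat)) with (a 1%nat) in Hc1.
    pose proof (Hstep j 0%nat) as Hs0. rewrite Nat.add_0_r in Hs0.
    pose proof (pow_le1 K j ltac:(lra)). pose proof (pow_le K j ltac:(lra)).
    assert (K ^ j * (EE rho (a 0%nat) (b 0%nat) - 2 * d) <= c0 - 2*d).
    { fold c0. nra. }
    assert ((EE rho (a j) (b 0%nat) - 2*d) * (1 - k) <= c0 + e0).
    { fold e0 in H0. nra. }
    unfold M. apply Rmult_le_reg_r with (1 - k). unfold k; lra.
    unfold Rdiv. rewrite Rmult_assoc, Rinv_l by (unfold k; lra). lra. }
  assert (Hcomp1 : forall n j, rho (fst (a (n+j)%nat)) (fst (b n)) <= d + K^n * M
             /\ rho (snd (a (n+j)%nat)) (snd (b n)) <= d + K^n * M).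
  { intros n j. pose proof (Hstep n j). pose proof (HM j).
    pose proof (pow_le K n ltac:(lra)).
    assert (K ^ n * (EE rho (a j) (b 0%nat) - 2 * d) <= K^n * M) by (apply Rmult_le_compat_l; auto).
    destruct (HA (n+j)%nat), (HB n).
    pose proof (Hd _ _ H3 H5). pose proof (Hd _ _ H4 H6).
    unfold EE in H, H2. split; lra. }
  assert (Cx : cauchy rho (fun n => fst (a n))).
  { apply (cauchy_of_buc X rho A B d _ (fun n => fst (b n)) K M); auto.
    - intro n; apply HA. - intro n; apply HB. - intros; apply Hcomp1. }
  assert (Cy : cauchy rho (fun n => snd (a n))).
  { apply (cauchy_of_buc X rho A B d _ (fun n => snd (b n)) K M); auto.
    - intro n; apply HA. - intro n; apply HB. - intros; apply Hcomp1. }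
  destruct (Hcomp _ Cx) as [xs Hxs]. destruct (Hcomp _ Cy) as [ys Hys].
  assert (Axs : A xs) by (apply (HclA _ _ (fun n => proj1 (HA n)) Hxs)).
  assert (Ays : A ys) by (apply (HclA _ _ (fun n => proj2 (HA n)) Hys)).
  assert (Hsh : forall s l, converges_to rho s l -> converges_to rho (fun n => s (S n)) l).
  { intros s l Hsl e He. destruct (Hsl e He) as [N HN]. exists N. intros n Hn. apply HN. lia. }
  assert (R0 : forall n, rho (fst (a n)) (fst (b n)) <= d + K^n * M
             /\ rho (snd (a n)) (snd (b n)) <= d + K^n * M).
  { intro n. pose proof (Hcomp1 n 0%nat). rewrite Nat.add_0_r in H. exact H. }
  set (u := F xs ys). set (v := F ys xs).
  assert (Bu : B u) by (apply HF; auto). assert (Bv : B v) by (apply HF; auto).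
  assert (E1 : rho xs u <= d).
  { apply (close_lim X rho (fun n => fst (a (S n))) (fun n => fst (a n)) (fun n => snd (a n))
      (fun n => fst (b n)) (fun n => snd (b n)) xs ys u d alpha beta K M); auto; try lra.
    - apply (Hsh (fun n => fst (a n))). auto.
    - intro n. destruct (HB n). apply Hc; auto.
    - intro n. apply R0.
    - intro n. apply R0. }
  assert (E2 : rho ys v <= d).
  { apply (close_lim X rho (fun n => snd (a (S n))) (fun n => snd (a n)) (fun n => fst (a n))
      (fun n => snd (b n)) (fun n => fst (b n)) ys xs v d alpha beta K M); auto; try lra.
    - apply (Hsh (fun n => snd (a n))). auto.
    - intro n. destruct (HB n). apply Hc; auto.
    - intro n. apply R0.
    - intro n. apply R0. }
  assert (E1' : rho xs u = d) by (pose proof (Hd _ _ Axs Bu); lra).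
  assert (E2' : rho ys v = d) by (pose proof (Hd _ _ Ays Bv); lra).
  exists xs, ys, u, v.
  split; [exact Axs|]. split; [exact Ays|]. split; [exact Bu|]. split; [exact Bv|].
  split; [exact E1'|]. split; [exact E2'|].
  split; [|split; [|lra]].
  - apply Rle_antisym.
    + unfold u at 1. pose proof (Hc xs ys u v Axs Ays Bu Bv). rewrite E1', E2' in H. lra.
    + rewrite Hs. apply Hd; auto.
  - apply Rle_antisym.
    + unfold v at 1. pose proof (Hc ys xs v u Ays Axs Bv Bu). rewrite E1', E2' in H. lra.
    + rewrite Hs. apply Hd; auto.
Qed.
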